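(* Let $\alpha\in\mathbb{R}$ and $0<\beta\le\frac14$. Suppose $F_2(\alpha,\beta)$ has Property A, $t\in\mathfrak{T}_1(F_1(\alpha,\beta)-F_1(\alpha,\beta))$, and $\Theta_\alpha(t)\ge0$ on $\mathbb{T}^2$. Then $t\in\mathfrak{U}_1(F_1(\alpha,\beta))$.
   Context: $\mathbb{T}=\mathbb{R}/\mathbb{Z}$, $e_j(x)=e^{2\pi i jx}$. $\mathfrak{T}_d$ is the algebra of trigonometric polynomials on $\mathbb{T}^d$; $\mathfrak{T}_d^+=\{t\in\mathfrak{T}_d:t\ge0\}$; for $F\subseteq\mathbb{Z}^d$, $\mathfrak{T}_d(F)=\{t\in\mathfrak{T}_d:\mathrm{freq}(t)\subseteq F\}$, $\mathfrak{T}_d^+(F)=\mathfrak{T}_d^+\cap\mathfrak{T}_d(F)$, $\mathfrak{S}_d(F)=\{|p|^2:p\in\mathfrak{T}_d(F)\}$, and $\mathfrak{U}_d(F)=\mathfrak{T}_d\cap\overline{\mathfrak{S}_d(F)}$ (closure in the sup norm on $C(\mathbb{T}^d)$). $F\subseteq\mathbb{Z}^d$ has Property A if $\mathfrak{U}_d(F)=\mathfrak{T}_d^+(F-F)$. For $\alpha\in\mathbb{R}$, $\theta_\alpha(j)$ is the smallest integer minimizing $|\theta_\alpha(j)-j\alpha|$, and $\Theta_\alpha(t)(x,y)=\sum_j\widehat t(j)e_j(x)e_{\theta_\alpha(j)}(y)$ for $t\in\mathfrak{T}_1$. $F_1(\alpha,\beta)=\{j\in\mathbb{Z}:|\theta_\alpha(j)-j\alpha|<\beta\}$,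 $F_2(\alpha,\beta)=\{(j,k)\in\mathbb{Z}^2:|k-j\alpha|<\beta\}$. *)

(* Defs.v *)
From Stdlib Require Import Reals ZArith List.
Import ListNotations.
Open Scope R_scope.

Record C := mkC { Re : R; Im : R }.
Definition C0 : C := mkC 0 0.
Definition Cadd (z w : C) : C := mkC (Re z + Re w) (Im z + Im w).
Definition Csub (z w : C) : C := mkC (Re z - Re w) (Im z - Im w).
Definition Cmul (z w : C) : C :=
  mkC (Re z * Re w - Im z * Im w) (Re z * Im w + Im z * Re w).
Definition Cnorm2 (z : C) : R := Re z * Re z + Im z * Im z.
Definition Cmod (z : C) : R := sqrt (Cnorm2 z).
Definition Csum (l : list C) : C := fold_right Cadd C0 l.

(** e_j(x) = exp(2 pi i j x), as a function on R (1-periodic, i.e. on T = R/Z). *)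
Definition ech (j : Z) (x : R) : C :=
  mkC (cos (2 * PI * (IZR j * x))) (sin (2 * PI * (IZR j * x))).

Definition ech2 (jk : Z * Z) (xy : R * R) : C :=
  Cmul (ech (fst jk) (fst xy)) (ech (snd jk) (snd xy)).

(** A trigonometric polynomial with frequencies in K: a coefficient function
    together with a duplicate-free list containing its support. *)
Record tpoly (K : Type) := TP { coef : K -> C; supp : list K }.
Arguments TP {K} _ _.
Arguments coef {K} _ _.
Arguments supp {K} _.

Definition tp_wf {K : Type} (t : tpoly K) : Prop :=
  NoDup (supp t) /\ forall k, coef t k <> C0 -> In k (supp t).

Definition teval {K X : Type} (chi : K -> X -> C) (t : tpoly K) (x : X) : C :=
  Csum (map (fun k => Cmul (coef t k) (chi k x)) (supp t)).

Definition in_T {K : Type} (F : K -> Prop) (t : tpoly K) : Prop :=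
  tp_wf t /\ forall k, coef t k <> C0 -> F k.

Definition tnonneg {K X : Type} (chi : K -> X -> C) (t : tpoly K) : Prop :=
  forall x, Im (teval chi t x) = 0 /\ 0 <= Re (teval chi t x).

Definition in_Tplus {K X : Type} (chi : K -> X -> C) (F : K -> Prop)
  (t : tpoly K) : Prop := in_T F t /\ tnonneg chi t.

(** U_d(F) = T_d ∩ closure (sup norm) of S_d(F) = { |p|^2 : p in T_d(F) }. *)
Definition in_U {K X : Type} (chi : K -> X -> C) (F : K -> Prop)
  (t : tpoly K) : Prop :=
  tp_wf t /\
  forall eps : R, 0 < eps ->
    exists p : tpoly K, in_T F p /\
      forall x, Cmod (Csub (teval chi t x) (mkC (Cnorm2 (teval chi p x)) 0)) <= eps.

Definition diffZ (F : Z -> Prop) (k : Z) : Prop :=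
  exists a b, F a /\ F b /\ k = (a - b)%Z.
Definition diffZ2 (F : Z * Z -> Prop) (k : Z * Z) : Prop :=
  exists a b, F a /\ F b /\ k = (fst a - fst b, snd a - snd b)%Z.

Definition PropertyA2 (F : Z * Z -> Prop) : Prop :=
  forall t : tpoly (Z * Z), in_U ech2 F t <-> in_Tplus ech2 (diffZ2 F) t.

(** floor via Stdlib's [up] (x < up x <= x + 1). *)
Definition Zfloor (x : R) : Z := (up x - 1)%Z.

(** theta_alpha(j): the smallest integer minimizing |m - j alpha|; the
    minimizers are among floor(j alpha), floor(j alpha)+1, and on a tie the
    smaller one, floor(j alpha), is chosen. *)
Definition theta (alpha : R) (j : Z) : Z :=
  let y := IZR j * alpha in
  let f := Zfloor y in
  if Rlt_dec (IZR (f + 1) - y) (y - IZR f) then (f + 1)%Z else f.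

Definition F1 (alpha beta : R) (j : Z) : Prop :=
  Rabs (IZR (theta alpha j) - IZR j * alpha) < beta.
Definition F2 (alpha beta : R) (jk : Z * Z) : Prop :=
  Rabs (IZR (snd jk) - IZR (fst jk) * alpha) < beta.

(** Theta_alpha(t)(x,y) = sum_j hat t(j) e_j(x) e_{theta(j)}(y). *)
Definition Theta (alpha : R) (t : tpoly Z) : tpoly (Z * Z) :=
  TP (fun jk => if Z.eq_dec (snd jk) (theta alpha (fst jk))
                then coef t (fst jk) else C0)
     (map (fun j => (j, theta alpha j)) (supp t)).

(* Main.v *)
Require Import Defs.
From Stdlib Require Import Reals ZArith List.
From Stdlib Require Import Lra Lia Classical FinFun.
Open Scope R_scope.

Lemma Ceq (z w : Defs.C) : Re z = Re w -> Im z = Im w -> z = w.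
Proof. destruct z, w; simpl; intros; subst; reflexivity. Qed.

Lemma theta_min (alpha : R) (j m : Z) :
  Rabs (IZR (theta alpha j) - IZR j * alpha) <= Rabs (IZR m - IZR j * alpha).
Proof.
  unfold theta; cbv zeta. set (y := IZR j * alpha).
  destruct (archimed y) as [A1 A2].
  assert (Hf1 : IZR (Defs.Zfloor y) <= y) by (unfold Defs.Zfloor; rewrite minus_IZR; simpl; lra).
  assert (Hf2 : y < IZR (Defs.Zfloor y) + 1) by (unfold Defs.Zfloor; rewrite minus_IZR; simpl; lra).
  set (f := Defs.Zfloor y) in *.
  assert (Hm : IZR m <= IZR f \/ IZR f + 1 <= IZR m).
  { destruct (Z.le_gt_cases m f) as [H|H].
    - left; apply IZR_le; lia.
    - right; rewrite <- plus_IZR; apply IZR_le; lia. }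
  unfold f in *; destruct (Rlt_dec _ _) as [H|H]; rewrite ?plus_IZR in *;
  unfold Rabs; repeat destruct Rcase_abs; lra.
Qed.

Lemma theta_diff (alpha beta : R) (a b : Z) : beta <= 1/4 ->
  F1 alpha beta a -> F1 alpha beta b ->
  theta alpha (a - b) = (theta alpha a - theta alpha b)%Z.
Proof.
  unfold F1; intros hb Ha Hb.
  pose proof (theta_min alpha (a - b) (theta alpha a - theta alpha b)) as H.
  rewrite !minus_IZR in H.
  apply Rabs_def2 in Ha; apply Rabs_def2 in Hb.
  assert (Hl : Rabs (IZR (theta alpha a) - IZR (theta alpha b) - (IZR a - IZR b) * alpha) < 1/2).
  { apply Rabs_def1; lra. }
  assert (H2 : Rabs (IZR (theta alpha (a - b)) - (IZR a - IZR b) * alpha) < 1/2) by lra.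
  apply Rabs_def2 in H2; apply Rabs_def2 in Hl.
  set (d := (theta alpha (a - b) - (theta alpha a - theta alpha b))%Z).
  assert (Hd1 : IZR d < 1) by (unfold d; rewrite !minus_IZR; lra).
  assert (Hd2 : -1 < IZR d) by (unfold d; rewrite !minus_IZR; lra).
  apply lt_IZR in Hd1. change (-1) with (IZR (-1)) in Hd2. apply lt_IZR in Hd2.
  unfold d in *; lia.
Qed.

Lemma ech_0 (k : Z) : ech k 0 = mkC 1 0.
Proof. unfold ech. rewrite !Rmult_0_r, cos_0, sin_0. reflexivity. Qed.

Lemma Cmul_1 (w : Defs.C) : Cmul w (mkC 1 0) = w.
Proof. apply Ceq; simpl; ring. Qed.

Lemma Csum_zero {A} (f : A -> Defs.C) l : (forall k, In k l -> f k = C0) -> Csum (map f l) = C0.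
Proof.
  induction l; simpl; intros H; auto.
  rewrite H by auto. rewrite IHl by auto. apply Ceq; simpl; ring.
Qed.

Lemma Csum_add {A} (f g : A -> Defs.C) l :
  Csum (map (fun j => Cadd (f j) (g j)) l) = Cadd (Csum (map f l)) (Csum (map g l)).
Proof.
  induction l; simpl. apply Ceq; simpl; ring.
  rewrite IHl. apply Ceq; simpl; ring.
Qed.

Lemma Csum_ind (L : list Z) (a : Z) (v : Z -> Defs.C) : NoDup L -> In a L ->
  Csum (map (fun j => if Z.eq_dec a j then v j else C0) L) = v a.
Proof.
  induction L as [|b L IH]; simpl; intros Hn Hi; [contradiction|].
  inversion Hn; subst.
  destruct (Z.eq_dec a b) as [e|e].
  - subst. rewrite Csum_zero. apply Ceq; simpl; ring.
    intros k Hk. destruct (Z.eq_dec b k); [subst; contradiction | reflexivity].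
  - destruct Hi as [Hi|Hi]; [congruence|]. rewrite IH by auto. apply Ceq; simpl; ring.
Qed.

Lemma swap_sum (L : list Z) (l : list (Z * Z)) (c : Z * Z -> Defs.C) (e : Z -> Defs.C) :
  NoDup L -> (forall k, In k l -> In (fst k) L) ->
  Csum (map (fun j => Cmul (Csum (map (fun k => if Z.eq_dec (fst k) j then c k else C0) l)) (e j)) L)
  = Csum (map (fun k => Cmul (c k) (e (fst k))) l).
Proof.
  intros Hn. induction l as [|k l IH]; simpl; intros Hin.
  - apply Csum_zero. intros; apply Ceq; simpl; ring.
  - rewrite <- IH by auto.
    transitivity (Csum (map (fun j => Cadd (if Z.eq_dec (fst k) j then Cmul (c k) (e j) else C0)
       (Cmul (Csum (map (fun k0 => if Z.eq_dec (fst k0) j then c k0 else C0) l)) (e j))) L)).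
    + f_equal. apply map_ext. intros j. destruct (Z.eq_dec (fst k) j); apply Ceq; simpl; ring.
    + rewrite Csum_add. f_equal. apply (Csum_ind L (fst k) (fun j => Cmul (c k) (e j))); auto.
Qed.

Theorem corollary1 (alpha beta : R) (hb0 : 0 < beta) (hb1 : beta <= 1 / 4)
  (hA : PropertyA2 (F2 alpha beta))
  (t : tpoly Z) (ht : in_T (diffZ (F1 alpha beta)) t)
  (hpos : tnonneg ech2 (Theta alpha t)) :
  in_U ech (F1 alpha beta) t.
Proof.
  destruct ht as [[Hnd Hsupp] Hfr].
  assert (HT : in_Tplus ech2 (diffZ2 (F2 alpha beta)) (Theta alpha t)).
  { split; [|exact hpos]. split; [split|].
    - simpl. apply FinFun.Injective_map_NoDup; auto.
      intros x y H; injection H; auto.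
    - intros [j k]; simpl. destruct (Z.eq_dec k (theta alpha j)); [|contradiction].
      subst. intros H. apply in_map_iff. exists j; auto.
    - intros [j k]; simpl. destruct (Z.eq_dec k (theta alpha j)); [|contradiction].
      subst. intros H. destruct (Hfr j H) as (a & b & Ha & Hb & ->).
      exists (a, theta alpha a), (b, theta alpha b). simpl.
      split; [exact Ha|]. split; [exact Hb|].
      rewrite (theta_diff alpha beta a b); auto. }
  apply hA in HT. destruct HT as [_ HU].
  split; [split; auto|].
  intros eps Heps. destruct (HU eps Heps) as (p & [[Hpn Hps] Hpf] & Hb).
  set (L := nodup Z.eq_dec (map fst (supp p))).
  set (q := TP (fun j => Csum (map (fun k => if Z.eq_dec (fst k) j then coef p k else C0) (supp p))) L).
  exists q. split.
  - assert (Key : forall j, coef q j <> C0 ->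
              exists k, In k (supp p) /\ fst k = j /\ coef p k <> C0).
    { intros j Hne. apply NNPP. intros Hno. apply Hne. simpl. apply Csum_zero.
      intros k Hk. destruct (Z.eq_dec (fst k) j); [|reflexivity].
      apply NNPP. intros Hc. apply Hno. exists k; auto. }
    split; [split|].
    + apply NoDup_nodup.
    + intros j Hj. destruct (Key j Hj) as (k & Hk & <- & _).
      simpl; unfold L. apply nodup_In. apply in_map; auto.
    + intros j Hj. destruct (Key j Hj) as (k & Hk & <- & Hc).
      pose proof (Hpf k Hc) as H2. unfold F2 in H2; unfold F1.
      pose proof (theta_min alpha (fst k) (snd k)). lra.
  - intros x. specialize (Hb (x, 0)).
    assert (E1 : teval ech2 (Theta alpha t) (x, 0) = teval ech t x).
    { unfold teval, Theta; simpl. rewrite map_map. f_equal. apply map_ext. intros j; simpl.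
      destruct (Z.eq_dec (theta alpha j) (theta alpha j)); [|contradiction].
      unfold ech2; simpl. rewrite ech_0, Cmul_1. reflexivity. }
    assert (E2 : teval ech2 p (x, 0) = teval ech q x).
    { unfold teval; simpl. unfold L. rewrite (swap_sum _ _ (coef p) (fun j => ech j x)).
      - f_equal. apply map_ext. intros k. unfold ech2; simpl. rewrite ech_0, Cmul_1. reflexivity.
      - apply NoDup_nodup.
      - intros k Hk. apply nodup_In, in_map; auto. }
    rewrite <- E1, <- E2. exact Hb.
Qed.
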